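(* For every integer $q\ge 2$, there exists a $\mathrm{TOC}_q(4,4,3)$.
   Context: $\mathcal{H}_q(n,w)$ is the set of all words of length $n$ over $\mathbb{Z}_q$ with exactly $w$ nonzero entries, with the Hamming distance. An $(n,d,w)_q$-code is a nonempty subset of $\mathcal{H}_q(n,w)$ in which any two distinct words have Hamming distance at least $d$; $A_q(n,d,w)$ is the maximum size of such a code and a code of this size is optimal. A $\mathrm{TOC}_q(n,d,w)$ is a partition of $\mathcal{H}_q(n,w)$ into mutually disjoint optimal $(n,d,w)_q$-codes. *)

(* Defs.v *)
From mathcomp Require Import all_boot.
Set Implicit Arguments. Unset Strict Implicit. Unset Printing Implicit Defensive.

(* Words of length n over Z_q, with alphabet represented by 'I_q = {0,..,q-1}
   (only the zero / nonzero distinction and equality matter here). *)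
Definition word (q n : nat) := {ffun 'I_n -> 'I_q}.

Definition hwt (q n : nat) (x : word q n) : nat :=
  #|[set i : 'I_n | nat_of_ord (x i) != 0]|.

Definition hdist (q n : nat) (x y : word q n) : nat :=
  #|[set i : 'I_n | x i != y i]|.

Definition Hq (q n w : nat) : {set word q n} := [set x | hwt x == w].

Definition is_code (q n d w : nat) (C : {set word q n}) : bool :=
  [&& C != set0, C \subset Hq q n w &
      [forall x in C, forall y in C, (x != y) ==> (d <= hdist x y)]].

Definition Aq (q n d w : nat) : nat :=
  \max_(C : {set word q n} | is_code d w C) #|C|.

Definition is_optimal_code (q n d w : nat) (C : {set word q n}) : bool :=
  is_code d w C && (#|C| == Aq q n d w).

Definition is_TOC (q n d w : nat) (P : {set {set word q n}}) : Prop :=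
  partition P (Hq q n w) /\ (forall C, C \in P -> is_optimal_code d w C).

(* Main.v *)
Require Import Defs.
From mathcomp Require Import all_boot.
From mathcomp Require Import all_algebra zify.
Set Implicit Arguments. Unset Strict Implicit. Unset Printing Implicit Defensive.
Import GRing.Theory.

Lemma hdist_full q (x y : word q 4) : (4 <= hdist x y) = [forall i, x i != y i].
Proof.
rewrite /hdist; apply/idP/forallP.
- move=> H i; have : [set i | x i != y i] == setT.
    by rewrite eqEcard subsetT cardsT card_ord.
  by move/eqP/setP/(_ i); rewrite !inE => ->.
- move=> H; suff -> : [set i | x i != y i] = setT by rewrite cardsT card_ord.
  by apply/setP=> i; rewrite !inE H.
Qed.

Lemma wt3P q (x : word q 4) : hwt x = 3 -> exists p, forall k, (nat_of_ord (x k) == 0) = (k == p).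
Proof.
rewrite /hwt => H.
have : #|~: [set i : 'I_4 | nat_of_ord (x i) != 0]| == 1.
  have := cardsC [set i : 'I_4 | nat_of_ord (x i) != 0].
  by rewrite H [#|'I_4|]card_ord => /eqP; rewrite -[4]/(3 + 1) eqn_add2l.
case/cards1P=> p Hp; exists p => k.
by move/setP: Hp => /(_ k); rewrite !inE negbK.
Qed.

Lemma wt3_of q (x : word q 4) p : (forall k, (nat_of_ord (x k) == 0) = (k == p)) -> x \in Hq q 4 3.
Proof.
move=> H; rewrite inE /hwt.
have -> : [set i : 'I_4 | nat_of_ord (x i) != 0] = [set~ p].
  by apply/setP=> k; rewrite !inE H.
by rewrite cardsC1 card_ord.
Qed.

Lemma optimal_of q k (C : {set word q 4}) :
  (forall C', @is_code q 4 4 3 C' -> #|C'| <= k) -> @is_code q 4 4 3 C -> k <= #|C| ->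
  is_optimal_code 4 3 C.
Proof.
move=> B HC Hk; rewrite /is_optimal_code HC /= /Aq.
have e : #|C| = k by apply/eqP; rewrite eqn_leq B.
rewrite eqn_leq; apply/andP; split.
  by apply: (@leq_bigmax_cond _ (fun C0 : {set word q 4} => @is_code q 4 4 3 C0) (fun C0 : {set word q 4} => #|C0|) C HC).
by apply/bigmax_leqP => C' /B; rewrite e.
Qed.

Lemma toc_of_key q k (K : finType) (f : word q 4 -> K) :
  (forall C, @is_code q 4 4 3 C -> #|C| <= k) ->
  (forall x, x \in Hq q 4 3 -> k <= #|[set y in Hq q 4 3 | f x == f y]|) ->
  (forall x y z, x \in Hq q 4 3 -> y \in Hq q 4 3 -> z \in Hq q 4 3 ->
     f x == f y -> f x == f z -> y != z -> forall i, y i != z i) ->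
  is_TOC 4 3 (preim_partition f (Hq q 4 3)).
Proof.
move=> B Hk Hd; split; first exact: preim_partitionP.
move=> C /imsetP [x Hx ->]; apply: (optimal_of B); last exact: Hk.
apply/and3P; split.
- by apply/set0Pn; exists x; rewrite inE Hx eqxx.
- by apply/subsetP=> y; rewrite inE => /andP[].
- apply/forallP=> y; apply/implyP; rewrite inE => /andP[Hy Hfy].
  apply/forallP=> z; apply/implyP; rewrite inE => /andP[Hz Hfz].
  apply/implyP=> yz; rewrite hdist_full; apply/forallP.
  exact: Hd Hx Hy Hz Hfy Hfz yz.
Qed.

Lemma avoid3 (p1 p2 p3 : 'I_4) : exists l : 'I_4, [&& l != p1, l != p2 & l != p3].
Proof.
have h1 : #|[set p1; p2; p3]| <= 3.
  apply: leq_trans (leq_card_setU _ _) _; rewrite cards1 addn1 ltnS.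
  by apply: leq_trans (leq_card_setU _ _) _; rewrite !cards1.
have h2 := cardsC [set p1; p2; p3].
rewrite card_ord in h2.
have : 0 < #|~: [set p1; p2; p3]| by lia.
case/card_gt0P => l; rewrite !inE => H; exists l; move: H; by case: (l == p1); case: (l == p2); case: (l == p3).
Qed.

Lemma code_diff q (C : {set word q 4}) x y : @is_code q 4 4 3 C -> x \in C -> y \in C -> x != y ->
  forall i, x i != y i.
Proof.
case/and3P=> _ _ /forallP H Hx Hy nxy.
move: (H x); rewrite Hx /= => /forallP /(_ y); rewrite Hy nxy /= hdist_full.
by move/forallP.
Qed.

Lemma code_wt q (C : {set word q 4}) x : @is_code q 4 4 3 C -> x \in C ->
  exists p, forall k, (nat_of_ord (x k) == 0) = (k == p).
Proof.
case/and3P=> _ /subsetP S _ /S; rewrite inE => /eqP; exact: wt3P.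
Qed.

Lemma code_le4 q (C : {set word q 4}) : @is_code q 4 4 3 C -> #|C| <= 4.
Proof.
move=> HC.
pose zp (x : word q 4) := odflt ord0 [pick k | nat_of_ord (x k) == 0].
have zpP : forall x, x \in C -> nat_of_ord (x (zp x)) == 0.
  move=> x Hx; rewrite /zp; case: pickP => //= H.
  case: (code_wt HC Hx) => p Hp; move: (H p); by rewrite Hp eqxx.
have inj : {in C &, injective zp}.
  move=> x y Hx Hy e; apply/eqP; apply/negPn/negP => nxy.
  have := code_diff HC Hx Hy nxy (zp x).
  move: (zpP x Hx) (zpP y Hy); rewrite -e => /eqP a /eqP b.
  by rewrite -val_eqE /= a b.
rewrite -(card_in_imset inj); apply: leq_trans (max_card _) _.
by rewrite card_ord.
Qed.

Lemma pick2 (T : finType) (C : {set T}) : 1 < #|C| -> exists x y, [/\ x \in C, y \in C & x != y].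
Proof.
move=> H; have : 0 < #|C| by lia.
case/card_gt0P => x Hx; move: H; rewrite (cardsD1 x) Hx add1n ltnS.
case/card_gt0P => y; rewrite !inE => /andP[a b].
by exists x, y; rewrite eq_sym.
Qed.

Lemma pick3 (T : finType) (C : {set T}) : 2 < #|C| ->
  exists x y z, [/\ x \in C, y \in C, z \in C & [&& x != y, y != z & x != z]].
Proof.
move=> H; have : 0 < #|C| by lia.
case/card_gt0P => x Hx; move: H; rewrite (cardsD1 x) Hx add1n ltnS => /pick2 [y [z []]].
rewrite !inE => /andP[a b] /andP[c d] e.
by exists x, y, z; rewrite b d e eq_sym a eq_sym c.
Qed.

Lemma code_le1 (C : {set word 2 4}) : @is_code 2 4 4 3 C -> #|C| <= 1.
Proof.
move=> HC; rewrite leqNgt; apply/negP => /pick2 [x [y [Hx Hy nxy]]].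
case: (code_wt HC Hx) => px Hpx; case: (code_wt HC Hy) => py Hpy.
case: (avoid3 px py py) => l /and3P[a b _].
have := code_diff HC Hx Hy nxy l.
move: (Hpx l) (Hpy l); rewrite (negbTE a) (negbTE b) -val_eqE.
case: (x l) => [u hu]; case: (y l) => [v hv] /= /eqP e1 /eqP e2.
apply/negP; rewrite negbK; apply/eqP; lia.
Qed.

Lemma code_le2 (C : {set word 3 4}) : @is_code 3 4 4 3 C -> #|C| <= 2.
Proof.
move=> HC; rewrite leqNgt; apply/negP => /pick3 [x [y [z [Hx Hy Hz /and3P[nxy nyz nxz]]]]].
case: (code_wt HC Hx) => px Hpx; case: (code_wt HC Hy) => py Hpy.
case: (code_wt HC Hz) => pz Hpz.
case: (avoid3 px py pz) => l /and3P[a b c].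
have := code_diff HC Hx Hy nxy l; have := code_diff HC Hy Hz nyz l.
have := code_diff HC Hx Hz nxz l.
move: (Hpx l) (Hpy l) (Hpz l); rewrite (negbTE a) (negbTE b) (negbTE c) -!val_eqE.
case: (x l) => [u hu]; case: (y l) => [v hv]; case: (z l) => [w hw] /= /eqP e1 /eqP e2 /eqP e3.
move=> /eqP h1 /eqP h2 /eqP h3; lia.
Qed.

Lemma toc2 : exists P : {set {set word 2 4}}, is_TOC 4 3 P.
Proof.
exists (preim_partition id (Hq 2 4 3)); apply: (toc_of_key (k := 1)).
- exact: code_le1.
- move=> x Hx; apply/card_gt0P; exists x; by rewrite inE Hx eqxx.
- by move=> x y z _ _ _ /eqP <- /eqP <-; rewrite eqxx.
Qed.

Definition tau (k : 'I_4) : 'I_4 := inord (if odd k then k.-1 else k.+1).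
Definition flip (v : 'I_3) : 'I_3 := inord (3 - v).

Lemma tauK k : tau (tau k) = k.
Proof. case: k => [[|[|[|[|k]]]] Hk]; apply/val_inj => //. all: rewrite /tau /= ?inordK // ?inordK //. Qed.

Lemma tau_neq k : tau k != k.
Proof. case: k => [[|[|[|[|k]]]] Hk]; rewrite /tau -val_eqE /= ?inordK //. Qed.

Lemma flip_nz (v : 'I_3) : nat_of_ord v != 0 -> (nat_of_ord (flip v) != 0) && (flip v != v) && (flip (flip v) == v).
Proof. case: v => [[|[|[|v]]] Hv] //= _; rewrite /flip -!val_eqE /= !inordK // ?inordK //. Qed.

Definition sigma (x : word 3 4) : word 3 4 :=
  [ffun k => if (nat_of_ord (x k) == 0) || (nat_of_ord (x (tau k)) == 0) then x (tau k) else flip (x k)].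

Section Sig.
Variables (x : word 3 4) (p : 'I_4).
Hypothesis Hp : forall k, (nat_of_ord (x k) == 0) = (k == p).

Lemma sigma_val k : sigma x k =
  if k == p then x (tau p) else if k == tau p then x p else flip (x k).
Proof.
rewrite /sigma ffunE !Hp.
case: (eqVneq k p) => [->|kp] //=.
case: (eqVneq k (tau p)) => [->|ktp]; first by rewrite tauK eqxx.
have : tau k != p by apply: contraNneq ktp => <-; rewrite tauK.
by move/negbTE => ->.
Qed.

Lemma sigma_zero k : (nat_of_ord (sigma x k) == 0) = (k == tau p).
Proof.
rewrite sigma_val.
case: (eqVneq k p) => [->|kp]; first by rewrite Hp (negbTE (tau_neq p)) eq_sym (negbTE (tau_neq p)).
case: (eqVneq k (tau p)) => [_|ktp] /=; first by rewrite Hp eqxx.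
have := Hp k; rewrite (negbTE kp) => /negbT /flip_nz /andP[/andP[h _] _].
by apply/negbTE.
Qed.

Lemma sigma_diff k : x k != sigma x k.
Proof.
rewrite sigma_val.
case: (eqVneq k p) => [->|kp].
  apply/negP => /eqP e; move: (Hp (tau p)); by rewrite -e Hp eqxx (negbTE (tau_neq p)).
case: (eqVneq k (tau p)) => [->|ktp].
  apply/negP => /eqP e; move: (Hp (tau p)); by rewrite e Hp eqxx (negbTE (tau_neq p)).
have := Hp k; rewrite (negbTE kp) => /negbT /flip_nz /andP[/andP[_ h] _].
by rewrite eq_sym.
Qed.

End Sig.

Lemma sigmaK (x : word 3 4) (p : 'I_4) : (forall k, (nat_of_ord (x k) == 0) = (k == p)) -> sigma (sigma x) = x.
Proof.
move=> Hp; apply/ffunP=> k; rewrite (sigma_val (sigma_zero Hp)) tauK.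
case: (eqVneq k (tau p)) => [->|ktp].
  by rewrite (sigma_val Hp) eqxx.
case: (eqVneq k p) => [->|kp].
  by rewrite (sigma_val Hp) (negbTE (tau_neq p)) eqxx.
rewrite (sigma_val Hp) (negbTE kp) (negbTE ktp).
have := Hp k; rewrite (negbTE kp) => /negbT /flip_nz /andP[_ /eqP h].
by [].
Qed.

Lemma toc3 : exists P : {set {set word 3 4}}, is_TOC 4 3 P.
Proof.
exists (preim_partition (fun x => [set x; sigma x]) (Hq 3 4 3)); apply: (toc_of_key (k := 2)).
- exact: code_le2.
- move=> x Hx; have [p Hp] : exists p, forall k, (nat_of_ord (x k) == 0) = (k == p).
    by apply: wt3P; move: Hx; rewrite inE => /eqP.
  have nx : x != sigma x by apply/negP => /eqP e; move: (sigma_diff Hp p); rewrite -e eqxx.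
  apply: (@leq_trans #|[set x; sigma x]|); first by rewrite cards2 nx.
  apply: subset_leq_card; apply/subsetP => y; rewrite !inE => /orP[]/eqP->.
    by move: Hx; rewrite inE => ->; rewrite eqxx.
  have := wt3_of (sigma_zero Hp); rewrite inE => ->.
  by rewrite (sigmaK Hp) setUC eqxx.
- move=> x y z Hx Hy Hz /eqP exy /eqP exz yz.
  have [p Hp] : exists p, forall k, (nat_of_ord (x k) == 0) = (k == p).
    by apply: wt3P; move: Hx; rewrite inE => /eqP.
  have : y \in [set x; sigma x] by rewrite exy !inE eqxx.
  have : z \in [set x; sigma x] by rewrite exz !inE eqxx.
  rewrite !inE => /orP[]/eqP ez /orP[]/eqP ey; rewrite ey ez in yz *.
  all: try by rewrite eqxx in yz.
  all: move=> i.
  + by rewrite eq_sym; exact: sigma_diff.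
  + exact: sigma_diff.
Qed.

Section Big.
Local Open Scope ring_scope.
Variable n : nat.
Local Notation m := n.+3.
Local Notation Z := 'Z_m.
Local Notation W := (word n.+4 4).

Definition av (v : 'I_n.+4) : Z := ((nat_of_ord v).-1)%:R.
Definition cc (p k : 'I_4) : Z := (if (p < k)%N then nat_of_ord p else (nat_of_ord p).-1)%:R.
Definition zp (x : W) : 'I_4 := odflt ord0 [pick k | nat_of_ord (x k) == 0%N].
Definition LL (x : W) k : Z := av (x k) - cc (zp x) k.
Definition key (x : W) : {ffun 'I_4 -> Z} :=
  [ffun k => if k == zp x then - \sum_(j | j != k) LL x j else LL x k].

Lemma valZ (i : nat) : nat_of_ord (i%:R : Z) = (i %% m)%N.
Proof. by rewrite val_Zp_nat. Qed.

Lemma zpE (x : W) p : (forall k, (nat_of_ord (x k) == 0%N) = (k == p)) -> zp x = p.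
Proof.
move=> Hp; rewrite /zp; case: pickP => [k|H] /=; first by rewrite Hp => /eqP.
by move: (H p); rewrite Hp eqxx.
Qed.

Lemma cc_inj p p' k : p != k -> p' != k -> cc p k = cc p' k -> p = p'.
Proof.
move=> a b /(congr1 (@nat_of_ord _)); rewrite !valZ => e.
apply/val_inj => /=; move: a b e; rewrite -!val_eqE /=.
case: p => [p hp]; case: p' => [p' hp']; case: k => [k hk] /=.
move=> /eqP a /eqP b.
case: ifP => h1; case: ifP => h2; rewrite !modn_small; lia.
Qed.

Lemma av_inj (v w : 'I_n.+4) : nat_of_ord v != 0%N -> nat_of_ord w != 0%N -> av v = av w -> v = w.
Proof.
move=> a b /(congr1 (@nat_of_ord _)); rewrite !valZ => e.
apply/val_inj; move: a b e; case: v => [v hv]; case: w => [w hw] /=.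
move=> /eqP a /eqP b; rewrite !modn_small; lia.
Qed.


Lemma key_off (x : W) k : k != zp x -> key x k = LL x k.
Proof. by move=> h; rewrite ffunE (negbTE h). Qed.

Lemma key_diff (x y z : W) : x \in Hq n.+4 4 3 -> y \in Hq n.+4 4 3 -> z \in Hq n.+4 4 3 ->
  key x == key y -> key x == key z -> y != z -> forall i, y i != z i.
Proof.
move=> _ Hy Hz /eqP e1 /eqP; rewrite e1 => /eqP/eqP e yz.
have [py Hpy] : exists p, forall k, (nat_of_ord (y k) == 0%N) = (k == p).
  by apply: wt3P; move: Hy; rewrite inE => /eqP.
have [pz Hpz] : exists p, forall k, (nat_of_ord (z k) == 0%N) = (k == p).
  by apply: wt3P; move: Hz; rewrite inE => /eqP.
have zy := zpE Hpy; have zz := zpE Hpz.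
have EL : forall k, k != py -> k != pz -> LL y k = LL z k.
  by move=> k a b; rewrite -key_off ?zy // e key_off ?zz.
case: (eqVneq py pz) => [epz|npz].
  move: yz => /negP; case; apply/eqP/ffunP => k.
  case: (eqVneq k py) => [ek|nk].
    have /eqP a : nat_of_ord (y k) == 0%N by rewrite Hpy ek.
    have /eqP b : nat_of_ord (z k) == 0%N by rewrite Hpz ek epz.
    by apply/val_inj; rewrite /= a b.
  have nk' : k != pz by rewrite -epz.
  apply: av_inj; first by rewrite Hpy.
    by rewrite Hpz.
  by move: (EL k nk nk'); rewrite /LL zy zz epz => /addIr.
move=> i; case: (eqVneq i py) => [ei|niy].
  apply/negP => /eqP ee; move: (Hpy i) (Hpz i); rewrite ee => ->; rewrite ei eqxx.
  by move/esym/eqP => h; move: npz; rewrite h eqxx.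
case: (eqVneq i pz) => [ei|niz].
  apply/negP => /eqP ee; move: (Hpy i) (Hpz i); rewrite ee => ->; rewrite ei eqxx.
  by move/eqP => h; move: npz; rewrite h eqxx.
apply/negP => /eqP ee; move: (EL i niy niz); rewrite /LL zy zz ee => /addrI /eqP.
rewrite eqr_opp => /eqP /cc_inj; rewrite eq_sym in niy; rewrite eq_sym in niz.
by move=> /(_ niy niz) ep; rewrite ep eqxx in npz.
Qed.


Lemma valZ_lt (z : Z) : (nat_of_ord z < m)%N.
Proof. exact: ltn_ord. Qed.

Definition ww (K : {ffun 'I_4 -> Z}) (p : 'I_4) : W :=
  [ffun k => if k == p then ord0 else inord (nat_of_ord (K k + cc p k)).+1].

Lemma ww_zero K p k : (nat_of_ord (ww K p k) == 0%N) = (k == p).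
Proof.
rewrite ffunE; case: (eqVneq k p) => [//|_].
by rewrite inordK // ltnS valZ_lt.
Qed.

Lemma ww_LL K p k : k != p -> LL (ww K p) k = K k.
Proof.
move=> h; rewrite /LL (zpE (ww_zero K p)) /av ffunE (negbTE h).
rewrite inordK; last by rewrite ltnS valZ_lt.
by rewrite -pred_Sn natr_Zp addrK.
Qed.

Lemma key_sum (x : W) : \sum_k key x k = 0.
Proof.
rewrite (bigD1 (zp x)) //= ffunE eqxx.
rewrite [X in _ + X](eq_bigr (fun j => LL x j)); first by rewrite addNr.
by move=> j h; rewrite key_off.
Qed.

Lemma key_ww (x : W) p : key (ww (key x) p) = key x.
Proof.
apply/ffunP=> k; rewrite ffunE (zpE (ww_zero (key x) p)).
case: (eqVneq k p) => [->|h]; last by rewrite ww_LL.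
rewrite (eq_bigr (fun j => key x j)); last by move=> j h; rewrite ww_LL.
have := key_sum x; rewrite (bigD1 p) //= => /eqP; rewrite addrC addr_eq0 => /eqP ->.
by rewrite opprK.
Qed.

Lemma fiber_big (x : W) : x \in Hq n.+4 4 3 ->
  (4 <= #|[set y in Hq n.+4 4 3 | key x == key y]|)%N.
Proof.
move=> Hx.
have inj : injective (ww (key x)).
  by move=> p p' e; rewrite -(zpE (ww_zero (key x) p)) e (zpE (ww_zero _ _)).
apply: (@leq_trans #|[set ww (key x) p | p : 'I_4]|).
  by rewrite card_imset // card_ord.
apply: subset_leq_card; apply/subsetP => y /imsetP [p _ ->].
rewrite inE (wt3_of (ww_zero _ _)) /=.
by rewrite key_ww eqxx.
Qed.

End Big.

Lemma toc4 n : exists P : {set {set word n.+4 4}}, is_TOC 4 3 P.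
Proof.
exists (preim_partition (@key n) (Hq n.+4 4 3)); apply: (toc_of_key (k := 4)).
- exact: code_le4.
- exact: fiber_big.
- exact: key_diff.
Qed.


Theorem theorem4p6 (q : nat) (hq : 2 <= q) :
  exists P : {set {set word q 4}}, is_TOC 4 3 P.
Proof.
case: q hq => [|[|[|[|n]]]] // _.
- exact: toc2.
- exact: toc3.
- exact: toc4.
Qed.
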